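(* For $n\ge2$ and all $P,Q\in\Gamma_n$, $D_{hI}(P\|Q)\le \frac12 D_{TJ}(P\|Q)$.
   Context: $\Gamma_n=\{P=(p_1,\dots,p_n): p_i>0,\ \sum p_i=1\}$. $h(P\|Q)=\frac12\sum_{i=1}^n(\sqrt{p_i}-\sqrt{q_i})^2$; $I(P\|Q)=\frac12\Big[\sum_{i=1}^n p_i\ln\frac{2p_i}{p_i+q_i}+\sum_{i=1}^n q_i\ln\frac{2q_i}{p_i+q_i}\Big]$; $J(P\|Q)=\sum_{i=1}^n(p_i-q_i)\ln\frac{p_i}{q_i}$; $T(P\|Q)=\sum_{i=1}^n\frac{p_i+q_i}{2}\ln\frac{p_i+q_i}{2\sqrt{p_iq_i}}$. $D_{hI}=h-I$, $D_{TJ}=T-\frac18J$. *)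

(* Defs.v *)
From HB Require Import structures.
From mathcomp Require Import all_boot all_order all_algebra.
From mathcomp Require Import all_classical all_reals.
From mathcomp Require Import exp.
Set Implicit Arguments. Unset Strict Implicit. Unset Printing Implicit Defensive.
Import Order.TTheory GRing.Theory Num.Theory.
Local Open Scope ring_scope.

Definition in_Gamma (R : realType) (n : nat) (P : 'I_n -> R) : Prop :=
  (forall i, 0 < P i) /\ \sum_(i < n) P i = 1.

Definition hdiv (R : realType) n (P Q : 'I_n -> R) : R :=
  2^-1 * \sum_(i < n) (Num.sqrt (P i) - Num.sqrt (Q i)) ^+ 2.

Definition Idiv (R : realType) n (P Q : 'I_n -> R) : R :=
  2^-1 * (\sum_(i < n) P i * ln (2 * P i / (P i + Q i))
        + \sum_(i < n) Q i * ln (2 * Q i / (P i + Q i))).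

Definition Jdiv (R : realType) n (P Q : 'I_n -> R) : R :=
  \sum_(i < n) (P i - Q i) * ln (P i / Q i).

Definition Tdiv (R : realType) n (P Q : 'I_n -> R) : R :=
  \sum_(i < n) (P i + Q i) / 2 * ln ((P i + Q i) / (2 * Num.sqrt (P i * Q i))).

Definition D_hI (R : realType) n (P Q : 'I_n -> R) : R := hdiv P Q - Idiv P Q.
Definition D_TJ (R : realType) n (P Q : 'I_n -> R) : R := Tdiv P Q - 8^-1 * Jdiv P Q.

(* Main.v *)
Require Import Defs.
From mathcomp Require Import all_boot all_order all_algebra.
From mathcomp Require Import all_classical all_reals.
From mathcomp Require Import exp.
From mathcomp Require Import topology normedtype derive realfun.
From mathcomp Require Import ring lra.
Import Order.TTheory GRing.Theory Num.Theory.
Import numFieldNormedType.Exports.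
Local Open Scope ring_scope.

Section S.
Variable R : realType.
Implicit Types t : R.

Definition lq t := ln ((t^+2+1)/2).

Lemma sq1_gt0 t : 0 < t^+2 + 1.
Proof. by apply: ltr_wpDl; [exact: sqr_ge0|]. Qed.

Lemma d_lq t : is_derive t 1 lq (2 * t / (t^+2+1)).
Proof.
have hp : 0 < (t^+2+1)/2 by apply: divr_gt0 => //; exact: sq1_gt0.
apply: is_derive_eq.
  have h := @is_derive1_comp R (@ln R) (fun t => (t^+2+1)/2) t _ _ (is_derive1_ln hp) _.
  exact: h.
rewrite /= scaler0 add0r addr0 /GRing.scale /= !mulr1.
have := sq1_gt0 t; rewrite lt0r => /andP[h0 _].
by field; rewrite ?s0 ?t0' ?h0.
Qed.

Lemma d_inv t : 0 < t -> is_derive t 1 (fun y : R => y^-1) (- (t ^+ 2)^-1).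
Proof.
move=> t0; apply: is_derive_eq.
  apply: is_deriveV; first by rewrite gt_eqF.
by rewrite /GRing.scale /= mulr1.
Qed.

Lemma d_inv2 t : 0 < t -> is_derive t 1 (fun y : R => (y^+2)^-1) (- 2 * (t ^+ 3)^-1).
Proof.
move=> t0; apply: is_derive_eq.
  apply: is_deriveV; first by rewrite expf_neq0 // gt_eqF.
rewrite /GRing.scale /= !mulr1.
have t0' : t != 0 by rewrite gt_eqF.
by field; rewrite ?s0 ?t0' ?h0.
Qed.

Definition Hf t := 5/4 * ln t - 2^-1 * lq t - 7/8 + t^-1 - 8^-1 * (t^+2)^-1.
Definition Gf t := (5*t^+2-1)/8 * ln t - (t^+2+1)/4 * lq t - (t-1)^+2/2.

Lemma d_Hf t : 0 < t -> is_derive t 1 Hf ((t-1)^+4 / (4 * t^+3 * (t^+2+1))).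
Proof.
move=> t0.
have h1 := is_derive1_ln t0.
have h2 := d_lq t.
have h3 := d_inv t t0.
have h4 := d_inv2 t t0.
rewrite /Hf; apply: is_derive_eq.
rewrite /GRing.scale /= subr0.
have t0' : t != 0 by rewrite gt_eqF.
have := sq1_gt0 t; rewrite lt0r => /andP[s0 _].
by field; rewrite s0 t0'.
Qed.

Lemma d_Gf t : 0 < t -> is_derive t 1 Gf (t * Hf t).
Proof.
move=> t0.
have h1 := is_derive1_ln t0.
have h2 := d_lq t.
rewrite /Gf; apply: is_derive_eq.
rewrite /GRing.scale /= /Hf.
have t0' : t != 0 by rewrite gt_eqF.
have := sq1_gt0 t; rewrite lt0r => /andP[s0 _].
by field; rewrite ?s0 ?t0' ?h0.
Qed.


Lemma mono_pos (f df : R -> R) (a b : R) : 0 < a -> a <= b ->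
  (forall x : R, 0 < x -> is_derive x 1 f (df x)) ->
  (forall x : R, a <= x <= b -> 0 <= df x) -> f a <= f b.
Proof.
move=> a0 ab fd dfp; rewrite -subr_ge0.
have [c cin ->] : exists2 c, c \in `[a, b]%R & f b - f a = df c * (b - a).
  apply: MVT_segment => //.
    move=> x; rewrite in_itv /= => /andP[ax _]; apply: fd; exact: lt_trans ax.
  apply: derivable_within_continuous => x; rewrite in_itv /= => /andP[ax _].
  have := fd x (lt_le_trans a0 ax); by case.
apply: mulr_ge0; last by rewrite subr_ge0.
by apply: dfp; move: cin; rewrite in_itv.
Qed.

Lemma Hf1 : Hf 1 = 0.
Proof.
rewrite /Hf /lq expr1n ln1 divff ?ln1; last by rewrite lt0r_neq0 // addr_gt0.
rewrite !mulr0 invr1 ?divr1 ?invr1 ?mulr1; lra.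
Qed.

Lemma Gf1 : Gf 1 = 0.
Proof.
rewrite /Gf /lq expr1n ln1 divff ?ln1; last by rewrite lt0r_neq0 // addr_gt0.
rewrite !mulr0 subrr; rewrite (subrr (1:R)) expr2 !mul0r; lra.
Qed.

Lemma Hf_ge t : 1 <= t -> 0 <= Hf t.
Proof.
move=> t1; rewrite -Hf1; apply: (@mono_pos Hf (fun x => (x-1)^+4 / (4 * x^+3 * (x^+2+1))) _ _).
- exact: ltr01.
- exact: t1.
- move=> x x0; exact: d_Hf.
- move=> x /andP[x1 _]; have x0 : 0 < x by exact: lt_le_trans x1.
  apply: divr_ge0; first by rewrite (_ : 4%N = (2 * 2)%N) // exprM sqr_ge0.
  by rewrite ltW // !mulr_gt0 ?exprn_gt0 ?sq1_gt0.
Qed.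

Lemma Hf_le t : 0 < t -> t <= 1 -> Hf t <= 0.
Proof.
move=> t0 t1; rewrite -Hf1; apply: (@mono_pos Hf (fun x => (x-1)^+4 / (4 * x^+3 * (x^+2+1))) _ _).
- exact: t0.
- exact: t1.
- move=> x x0; exact: d_Hf.
- move=> x /andP[x1 _]; have x0 : 0 < x by exact: lt_le_trans x1.
  apply: divr_ge0; first by rewrite (_ : 4%N = (2 * 2)%N) // exprM sqr_ge0.
  by rewrite ltW // !mulr_gt0 ?exprn_gt0 ?sq1_gt0.
Qed.

Lemma Gf_ge t : 0 < t -> 0 <= Gf t.
Proof.
move=> t0; rewrite -Gf1.
case: (lerP 1 t) => t1.
  apply: (@mono_pos Gf (fun x => x * Hf x) _ _).
  - exact: ltr01.
  - exact: t1.
  - move=> x x0; exact: d_Gf.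
  - move=> x /andP[x1 _]; apply: mulr_ge0; [exact: le_trans x1| exact: Hf_ge].
rewrite -lerN2.
apply: (@mono_pos (fun x => - Gf x) (fun x => - (x * Hf x)) _ _).
- exact: t0.
- exact: ltW.
- move=> x x0; apply: is_deriveN; exact: d_Gf.
- move=> x /andP[tx x1]; rewrite oppr_ge0; apply: mulr_ge0_le0.
  + apply: ltW; exact: lt_le_trans tx.
  + apply: Hf_le x1; exact: lt_le_trans tx.
Qed.
Lemma term_ab (a b : R) : 0 < a -> 0 < b ->
  2^-1 * (Num.sqrt (a^+2) - Num.sqrt (b^+2)) ^+ 2 -
  2^-1 * (a^+2 * ln (2 * a^+2 / (a^+2 + b^+2)) + b^+2 * ln (2 * b^+2 / (a^+2 + b^+2))) <=
  2^-1 * ((a^+2 + b^+2) / 2 * ln ((a^+2 + b^+2) / (2 * Num.sqrt (a^+2 * b^+2))) -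
   8^-1 * ((a^+2 - b^+2) * ln (a^+2 / b^+2))).
Proof.
move=> a0 b0.
have a0' : a != 0 by rewrite gt_eqF.
have b0' : b != 0 by rewrite gt_eqF.
have p0 : 0 < a^+2 by rewrite exprn_gt0.
have q0 : 0 < b^+2 by rewrite exprn_gt0.
have s0 : 0 < (a^+2 + b^+2) / 2 by rewrite divr_gt0 // addr_gt0.
have ab0 : 0 < a * b by rewrite mulr_gt0.
rewrite -exprMn !sqrtr_sqr !gtr0_norm //.
have L1 : ln (2 * a^+2 / (a^+2 + b^+2)) = ln (a^+2) - ln ((a^+2 + b^+2) / 2).
  rewrite -ln_div //; congr ln; field; rewrite gt_eqF // addr_gt0 //.
have L2 : ln (2 * b^+2 / (a^+2 + b^+2)) = ln (b^+2) - ln ((a^+2 + b^+2) / 2).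
  rewrite -ln_div //; congr ln; field; rewrite gt_eqF // addr_gt0 //.
have L3 : ln ((a^+2 + b^+2) / (2 * (a * b))) = ln ((a^+2 + b^+2) / 2) - (ln a + ln b).
  by rewrite -lnM // -ln_div //; congr ln; field; rewrite a0' b0'.
have L4 : ln (a^+2 / b^+2) = ln (a^+2) - ln (b^+2) by rewrite ln_div.
have t0 : 0 < a / b by rewrite divr_gt0.
have L7 : ln (a / b) = ln a - ln b by rewrite ln_div.
have L8 : lq (a / b) = ln ((a^+2 + b^+2) / 2) - ln (b^+2).
  by rewrite /lq -ln_div //; congr ln; field; rewrite b0'.
have G := Gf_ge (a / b) t0.
rewrite L1 L2 L3 L4 !lnXn //.
move: G; rewrite /Gf L7 L8 lnXn //.
move: (ln a) (ln b) (ln ((a^+2 + b^+2) / 2)) => la lb C G.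
rewrite -subr_ge0.
have -> : 2^-1 * ((a ^+ 2 + b ^+ 2) / 2 * (C - (la + lb)) -
   8^-1 * ((a ^+ 2 - b ^+ 2) * (la *+ 2 - lb *+ 2))) -
  (2^-1 * (a - b) ^+ 2 -
   2^-1 * (a ^+ 2 * (la *+ 2 - C) + b ^+ 2 * (lb *+ 2 - C))) =
  b^+2 * ((5 * (a / b) ^+ 2 - 1) / 8 * (la - lb) -
      ((a / b) ^+ 2 + 1) / 4 * (C - lb *+ 2) - (a / b - 1) ^+ 2 / 2).
  by rewrite !mulr2n; field; rewrite b0'.
by rewrite mulr_ge0 // ltW.
Qed.
End S.

Theorem proposition5p3 (R : realType) (n : nat) (hn : (2 <= n)%N)
  (P Q : 'I_n -> R) (hP : in_Gamma P) (hQ : in_Gamma Q) :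
  D_hI P Q <= 2^-1 * D_TJ P Q.
Proof.
rewrite /D_hI /hdiv /Idiv /D_TJ /Tdiv /Jdiv -big_split /= !mulr_sumr -sumrB.
rewrite -sumrB mulr_sumr.
apply: ler_sum => i _.
have pi := hP.1 i.
have qi := hQ.1 i.
have pa : 0 < Num.sqrt (P i) by rewrite sqrtr_gt0.
have qa : 0 < Num.sqrt (Q i) by rewrite sqrtr_gt0.
have h := @term_ab R _ _ pa qa.
rewrite !sqr_sqrtr in h; try exact: ltW.
exact: h.
Qed.
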